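(* The reduction relation $\to_{{\tt j}/{\tt obox}}$ on $\lambda j$-terms is terminating.
   Context: $\lambda j$-terms are generated by $t,u::= x\mid \lambda x.t\mid t\,u\mid t[x/u]$; $\lambda x.t$ and $t[x/u]$ bind $x$ in $t$ (not in $u$), and terms are considered modulo $\alpha$-conversion. $\mathrm{fv}(t)$ is the set of free variables, $t\{x/u\}$ is capture-avoiding meta-level substitution, and $|t|_x$ is the number of free occurrences of $x$ in $t$. If $|t|_x=n\ge2$, $t_{[y]_x}$ denotes any term obtained from $t$ by replacing $k$ of the free occurrences of $x$ by a fresh variable $y$, for some $1\le k\le n-1$. $\to_{\tt j}$ is the closure under all contexts of: $({\tt w})$ $t[x/u]\to t$ if $|t|_x=0$; $({\tt d})$ $t[x/u]\to t\{x/u\}$ if $|t|_x=1$; $({\tt c})$ $t[x/u]\to t_{[y]_x}[x/u][y/u]$ if $|t|_x\ge2$, $y$ fresh. The substitution equivalence $\equiv_{\tt obox}$ is the smallest equivalence closed under contexts containing: $t[x/s][y/v]\sim t[y/v][x/s]$ if $x\notin\mathrm{fv}(v)$ and $y\notin\mathrm{fv}(s)$; $\lambda y.(t[x/s])\sim(\lambda y.t)[x/s]$ if $y\notin\mathrm{fv}(s)$; $t[x/s]\,v\sim(t\,v)[x/s]$ if $x\notin\mathrm{fv}(v)$; $(t\,v)[x/u]\sim t\,(v[x/u])$ if $x\notin\mathrm{fv}(t)$ and $x\in\mathrm{fv}(v)$; $t[y/v][x/u]\sim t[y/v[x/u]]$ if $x\notin\mathrm{fv}(t)$ and $x\in\mathrm{fv}(v)$.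 $t\to_{{\tt j}/{\tt obox}}u$ iff $t\equiv_{\tt obox}t'\to_{\tt j}u'\equiv_{\tt obox}u$ for some $t',u'$. *)

(* Defs.v *)
(* lambda-j terms in de Bruijn notation (terms modulo alpha). *)
From Stdlib Require Import Arith Relations.

(* Var n : de Bruijn index n;  Lam t : lambda binding index 0 of t;
   App t u;  Sub t u : explicit substitution t[x/u], binding index 0 of t
   (and nothing in u). *)
Inductive term : Type :=
| Var : nat -> term
| Lam : term -> term
| App : term -> term -> term
| Sub : term -> term -> term.

Fixpoint lift (c : nat) (t : term) : term :=
  match t with
  | Var n => if n <? c then Var n else Var (S n)
  | Lam t => Lam (lift (S c) t)
  | App t u => App (lift c t) (lift c u)
  | Sub t u => Sub (lift (S c) t) (lift c u)
  end.

(* lower c t : shift free indices > c down by one (used when c is not free) *)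
Fixpoint lower (c : nat) (t : term) : term :=
  match t with
  | Var n => if n <=? c then Var n else Var (pred n)
  | Lam t => Lam (lower (S c) t)
  | App t u => App (lower c t) (lower c u)
  | Sub t u => Sub (lower (S c) t) (lower c u)
  end.

Fixpoint swap (c : nat) (t : term) : term :=
  match t with
  | Var n => if n =? c then Var (S c) else if n =? S c then Var c else Var n
  | Lam t => Lam (swap (S c) t)
  | App t u => App (swap c t) (swap c u)
  | Sub t u => Sub (swap (S c) t) (swap c u)
  end.

(* subst k u t : capture-avoiding meta-level substitution t{k/u}, where
   index k is removed (indices > k decremented) *)
Fixpoint subst (k : nat) (u : term) (t : term) : term :=
  match t with
  | Var n => if n =? k then Nat.iter k (lift 0) u
             else if n <? k then Var n else Var (pred n)
  | Lam t => Lam (subst (S k) u t)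
  | App t s => App (subst k u t) (subst k u s)
  | Sub t s => Sub (subst (S k) u t) (subst k u s)
  end.

Fixpoint occ (k : nat) (t : term) : nat :=
  match t with
  | Var n => if n =? k then 1 else 0
  | Lam t => occ (S k) t
  | App t s => occ k t + occ k s
  | Sub t s => occ (S k) t + occ k s
  end.

(* split c t t' : t' is obtained from t by inserting a fresh index y at
   position c+1 (x being index c) and replacing SOME occurrences of x by y.
   Together with occ c t' >= 1 and occ (S c) t' >= 1 this is t_{[y]_x}. *)
Inductive split : nat -> term -> term -> Prop :=
| split_lt : forall c n, n < c -> split c (Var n) (Var n)
| split_keep : forall c, split c (Var c) (Var c)
| split_rename : forall c, split c (Var c) (Var (S c))
| split_gt : forall c n, c < n -> split c (Var n) (Var (S n))
| split_lam : forall c t t', split (S c) t t' -> split c (Lam t) (Lam t')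
| split_app : forall c t t' s s',
    split c t t' -> split c s s' -> split c (App t s) (App t' s')
| split_sub : forall c t t' s s',
    split (S c) t t' -> split c s s' -> split c (Sub t s) (Sub t' s').

Inductive jrule : term -> term -> Prop :=
| rule_w : forall t u, occ 0 t = 0 -> jrule (Sub t u) (lower 0 t)
| rule_d : forall t u, occ 0 t = 1 -> jrule (Sub t u) (subst 0 u t)
| rule_c : forall t u t', 2 <= occ 0 t -> split 0 t t' ->
    1 <= occ 0 t' -> 1 <= occ 1 t' ->
    (* t_{[y]_x}[x/u][y/u] *)
    jrule (Sub t u) (Sub (Sub t' (lift 0 u)) u).

Inductive ctx (R : term -> term -> Prop) : term -> term -> Prop :=
| ctx_base : forall t u, R t u -> ctx R t u
| ctx_lam : forall t u, ctx R t u -> ctx R (Lam t) (Lam u)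
| ctx_appl : forall t u s, ctx R t u -> ctx R (App t s) (App u s)
| ctx_appr : forall t u s, ctx R t u -> ctx R (App s t) (App s u)
| ctx_subl : forall t u s, ctx R t u -> ctx R (Sub t s) (Sub u s)
| ctx_subr : forall t u s, ctx R t u -> ctx R (Sub s t) (Sub s u).

Definition jstep : term -> term -> Prop := ctx jrule.

(* the axioms of ~ generating obox (side conditions of the form
   "bound variable not free in an outer term" are automatic up to alpha) *)
Inductive obox_ax : term -> term -> Prop :=
  (* t[x/s][y/v] ~ t[y/v][x/s],  y notin fv(s) *)
| ax_comm : forall t s v, occ 0 s = 0 ->
    obox_ax (Sub (Sub t s) v) (Sub (Sub (swap 0 t) (lift 0 v)) (lower 0 s))
  (* lambda y.(t[x/s]) ~ (lambda y.t)[x/s],  y notin fv(s) *)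
| ax_lam : forall t s, occ 0 s = 0 ->
    obox_ax (Lam (Sub t s)) (Sub (Lam (swap 0 t)) (lower 0 s))
  (* t[x/s] v ~ (t v)[x/s],  x notin fv(v) *)
| ax_appl : forall t s v,
    obox_ax (App (Sub t s) v) (Sub (App t (lift 0 v)) s)
  (* (t v)[x/u] ~ t (v[x/u]),  x notin fv(t), x in fv(v) *)
| ax_appr : forall t v u, occ 0 t = 0 -> 0 < occ 0 v ->
    obox_ax (Sub (App t v) u) (App (lower 0 t) (Sub v u))
  (* t[y/v][x/u] ~ t[y/v[x/u]],  x notin fv(t), x in fv(v) *)
| ax_box : forall t v u, occ 1 t = 0 -> 0 < occ 0 v ->
    obox_ax (Sub (Sub t v) u) (Sub (lower 1 t) (Sub v u)).

Definition obox_eq : term -> term -> Prop :=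
  clos_refl_sym_trans term (ctx obox_ax).

Definition jmod (t u : term) : Prop :=
  exists t' u', obox_eq t t' /\ jstep t' u' /\ obox_eq u' u.

(* Main.v *)
Require Import Defs.
From Stdlib Require Import Arith Relations Lia.

Fixpoint pm (k : nat) (t : term) : nat :=
  match t with
  | Var n => if n =? k then 1 else 0
  | Lam t => pm (S k) t
  | App t s => pm k t + pm k s
  | Sub t s => pm (S k) t + Nat.max 1 (pm 0 t) * pm k s
  end.

Fixpoint Sz (t : term) : nat :=
  match t with
  | Var _ => 1
  | Lam t => Sz t + 1
  | App t s => Sz t + Sz s + 1
  | Sub t s => Sz t + Nat.max 1 (pm 0 t) * Sz s
  end.

Fixpoint Fm (t : term) : nat :=
  match t with
  | Var _ => 0
  | Lam t => Fm t
  | App t s => Fm t + Fm s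
  | Sub t s => Fm t + Nat.max 1 (pm 0 t) * (1 + Fm s)
  end.

Fixpoint Nm (t : term) : nat :=
  match t with
  | Var _ => 0
  | Lam t => Nm t
  | App t s => Nm t + Nm s
  | Sub t s => Nm t + Nm s + 1
  end.

Ltac bdestr := repeat match goal with
 | |- context [?a =? ?b] => destruct (Nat.eqb_spec a b)
 | |- context [?a <? ?b] => destruct (Nat.ltb_spec a b)
 | |- context [?a <=? ?b] => destruct (Nat.leb_spec a b)
 | H: context [?a =? ?b] |- _ => destruct (Nat.eqb_spec a b)
 end.

Ltac vcase := cbn [pm lift lower swap Sz Fm Nm]; bdestr; cbn [pm lift lower swap Sz Fm Nm]; bdestr; try lia.

Lemma pm_lift_lt : forall t c j, j < c -> pm j (lift c t) = pm j t.
Proof.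
  induction t; intros c j H; simpl.
  - vcase.
  - apply IHt; lia.
  - rewrite IHt1, IHt2; lia.
  - rewrite IHt1, (IHt1 (S c) 0), IHt2; lia.
Qed.

Lemma pm_lift_eq : forall t c, pm c (lift c t) = 0.
Proof.
  induction t; intros c; simpl.
  - vcase.
  - apply IHt.
  - rewrite IHt1, IHt2; lia.
  - rewrite IHt1, IHt2; lia.
Qed.

Lemma pm_lift_ge : forall t c j, c <= j -> pm (S j) (lift c t) = pm j t.
Proof.
  induction t; intros c j H; simpl.
  - vcase.
  - apply IHt; lia.
  - rewrite IHt1, IHt2; lia.
  - rewrite IHt1, (pm_lift_lt t1 (S c) 0), IHt2; lia.
Qed.

Lemma Sz_lift : forall t c, Sz (lift c t) = Sz t.
Proof.
  induction t; intros c; simpl; try vcase.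
  - rewrite IHt; lia.
  - rewrite IHt1, IHt2; lia.
  - rewrite IHt1, IHt2, pm_lift_lt; lia.
Qed.
Lemma Fm_lift : forall t c, Fm (lift c t) = Fm t.
Proof.
  induction t; intros c; simpl; try vcase.
  - rewrite IHt; lia.
  - rewrite IHt1, IHt2; lia.
  - rewrite IHt1, IHt2, pm_lift_lt; lia.
Qed.
Lemma Nm_lift : forall t c, Nm (lift c t) = Nm t.
Proof.
  induction t; intros c; simpl; try vcase.
  - rewrite IHt; lia.
  - rewrite IHt1, IHt2; lia.
  - rewrite IHt1, IHt2; lia.
Qed.

Definition sw c j := if j =? c then S c else if j =? S c then c else j.

Lemma pm_swap : forall t c j, pm j (swap c t) = pm (sw c j) t.
Proof.
  induction t; intros c j; cbn [swap pm].
  - unfold sw; destruct (Nat.eqb_spec j c); [|destruct (Nat.eqb_spec j (S c))]; vcase.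
  - rewrite IHt. f_equal. unfold sw. cbn [Nat.eqb]. bdestr; lia.
  - rewrite IHt1, IHt2; lia.
  - rewrite IHt1, IHt1, IHt2. unfold sw at 1 3. cbn [Nat.eqb].
    replace (if j =? c then S (S c) else if j =? S c then S c else S j) with (S (sw c j))
      by (unfold sw; bdestr; lia). reflexivity.
Qed.

Lemma sw0 : sw 0 0 = 1. Proof. reflexivity. Qed.
Lemma sw1 : sw 0 1 = 0. Proof. reflexivity. Qed.
Lemma swS : forall j, sw 0 (S (S j)) = S (S j). Proof. reflexivity. Qed.

Lemma Sz_swap : forall t c, Sz (swap c t) = Sz t.
Proof.
  induction t; intros c; simpl; try vcase.
  - rewrite IHt; lia.
  - rewrite IHt1, IHt2; lia.
  - rewrite IHt1, IHt2, pm_swap. reflexivity.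
Qed.
Lemma Fm_swap : forall t c, Fm (swap c t) = Fm t.
Proof.
  induction t; intros c; simpl; try vcase.
  - rewrite IHt; lia.
  - rewrite IHt1, IHt2; lia.
  - rewrite IHt1, IHt2, pm_swap. reflexivity.
Qed.
Lemma Nm_swap : forall t c, Nm (swap c t) = Nm t.
Proof.
  induction t; intros c; simpl; try vcase.
  - rewrite IHt; lia.
  - rewrite IHt1, IHt2; lia.
  - rewrite IHt1, IHt2; lia.
Qed.

Lemma pm_lower_lt : forall t c j, j < c -> pm j (lower c t) = pm j t.
Proof.
  induction t; intros c j H; simpl.
  - vcase.
  - apply IHt; lia.
  - rewrite IHt1, IHt2; lia.
  - rewrite IHt1, (IHt1 (S c) 0), IHt2; lia.
Qed.

Lemma pm_lower_eq : forall t c, pm c (lower c t) = pm c t + pm (S c) t.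
Proof.
  induction t; intros c; simpl.
  - vcase.
  - apply IHt.
  - rewrite IHt1, IHt2; lia.
  - rewrite IHt1, IHt2, (pm_lower_lt t1 (S c) 0); lia.
Qed.

Lemma pm_lower_gt : forall t c j, c <= j -> pm (S j) (lower c t) = pm (S (S j)) t.
Proof.
  induction t; intros c j H; simpl.
  - vcase.
  - apply IHt; lia.
  - rewrite IHt1, IHt2; lia.
  - rewrite IHt1, (pm_lower_lt t1 (S c) 0), IHt2; lia.
Qed.

Lemma Sz_lower : forall t c, Sz (lower c t) = Sz t.
Proof.
  induction t; intros c; simpl; try vcase.
  - rewrite IHt; lia.
  - rewrite IHt1, IHt2; lia.
  - rewrite IHt1, IHt2, pm_lower_lt; lia.
Qed.
Lemma Fm_lower : forall t c, Fm (lower c t) = Fm t.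
Proof.
  induction t; intros c; simpl; try vcase.
  - rewrite IHt; lia.
  - rewrite IHt1, IHt2; lia.
  - rewrite IHt1, IHt2, pm_lower_lt; lia.
Qed.
Lemma Nm_lower : forall t c, Nm (lower c t) = Nm t.
Proof.
  induction t; intros c; simpl; try vcase.
  - rewrite IHt; lia.
  - rewrite IHt1, IHt2; lia.
  - rewrite IHt1, IHt2; lia.
Qed.

Lemma occ_pm0 : forall t k, occ k t = 0 -> pm k t = 0.
Proof.
  induction t; intros k H; simpl in *.
  - destruct (n =? k); lia.
  - auto.
  - rewrite IHt1, IHt2; lia.
  - rewrite IHt1, IHt2; lia.
Qed.

Lemma le_mulm : forall m x, 1 <= m -> x <= m * x.
Proof. intros m x H. rewrite <- (Nat.mul_1_l x) at 1. apply Nat.mul_le_mono_r; lia. Qed.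

Lemma occ_le_pm : forall t k, occ k t <= pm k t.
Proof.
  induction t; intros k; cbn [pm occ Sz Fm Nm].
  - destruct (n =? k); lia.
  - auto.
  - specialize (IHt1 k); specialize (IHt2 k); lia.
  - specialize (IHt1 (S k)); specialize (IHt2 k).
    assert (1 <= Nat.max 1 (pm 0 t1)) by lia.
    assert (pm k t2 <= Nat.max 1 (pm 0 t1) * pm k t2) by (apply le_mulm; lia). lia.
Qed.

Lemma Nm_le_Fm : forall t, Nm t <= Fm t.
Proof.
  induction t; cbn [pm occ Sz Fm Nm]; try lia.
  assert (1 <= Nat.max 1 (pm 0 t1)) by lia.
  assert (1 + Fm t2 <= Nat.max 1 (pm 0 t1) * (1 + Fm t2)) by (apply le_mulm; lia). lia.
Qed.

Lemma iter_S : forall k u, Nat.iter (S k) (lift 0) u = lift 0 (Nat.iter k (lift 0) u).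
Proof. reflexivity. Qed.

Lemma pm_iter_lt : forall k u j, j < k -> pm j (Nat.iter k (lift 0) u) = 0.
Proof.
  induction k; intros u j H; [lia|]. rewrite iter_S.
  destruct j. apply pm_lift_eq. rewrite pm_lift_ge by lia. apply IHk; lia.
Qed.

Lemma pm_iter_ge : forall k u j, k <= j -> pm j (Nat.iter k (lift 0) u) = pm (j - k) u.
Proof.
  induction k; intros u j H. simpl. rewrite Nat.sub_0_r; reflexivity.
  rewrite iter_S. destruct j; [lia|]. rewrite pm_lift_ge by lia. rewrite IHk by lia.
  f_equal.
Qed.

Lemma Sz_iter : forall k u, Sz (Nat.iter k (lift 0) u) = Sz u.
Proof. induction k; intros u; [reflexivity|]. rewrite iter_S, Sz_lift; auto. Qed.

Lemma pm_subst_lt : forall t k u j, j < k -> pm j (subst k u t) = pm j t.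
Proof.
  induction t; intros k u j H; cbn [subst pm].
  - destruct (Nat.eqb_spec n k). subst. rewrite pm_iter_lt by lia.
    cbn [pm]; bdestr; lia. vcase.
  - apply IHt; lia.
  - rewrite IHt1, IHt2; lia.
  - rewrite IHt1, (IHt1 (S k) u 0), IHt2; lia.
Qed.

Lemma pm_subst_ge : forall t k u j, k <= j ->
  pm j (subst k u t) = pm (S j) t + pm k t * pm (j - k) u.
Proof.
  induction t; intros k u j H; cbn [subst pm].
  - destruct (Nat.eqb_spec n k). subst. rewrite pm_iter_ge by lia.
    cbn [pm]; bdestr; lia. vcase.
  - rewrite IHt by lia. replace (S j - S k) with (j - k) by lia. reflexivity.
  - rewrite IHt1, IHt2 by lia. ring.
  - rewrite IHt1 by lia. rewrite (pm_subst_lt t1 (S k) u 0) by lia. rewrite IHt2 by lia.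
    replace (S j - S k) with (j - k) by lia. ring.
Qed.

Lemma Sz_pos : forall t, 1 <= Sz t.
Proof.
  induction t; cbn [Sz]; try lia.
Qed.

Lemma Sz_subst : forall t k u, Sz (subst k u t) + pm k t = Sz t + pm k t * Sz u.
Proof.
  induction t; intros k u; cbn [subst pm Sz].
  - destruct (Nat.eqb_spec n k). subst. rewrite Sz_iter. lia.
    destruct (n <? k); cbn [Sz]; lia.
  - specialize (IHt (S k) u). lia.
  - specialize (IHt1 k u). specialize (IHt2 k u). nia.
  - specialize (IHt1 (S k) u). specialize (IHt2 k u).
    rewrite (pm_subst_lt t1 (S k) u 0) by lia.
    set (m := Nat.max 1 (pm 0 t1)) in *. nia.
Qed.

Lemma split_props : forall c t t', split c t t' ->
  (forall j, j < c -> pm j t' = pm j t) /\ (forall j, c < j -> pm (S j) t' = pm j t) /\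
  pm c t' + pm (S c) t' = pm c t /\ Sz t' = Sz t /\ Fm t' = Fm t /\ Nm t' = Nm t.
Proof.
  induction 1; cbn [pm Sz Fm Nm].
  - repeat split; intros; bdestr; lia.
  - repeat split; intros; bdestr; lia.
  - repeat split; intros; bdestr; lia.
  - repeat split; intros; bdestr; lia.
  - destruct IHsplit as [H1 [H2 [H3 [H4 [H5 H6]]]]].
    repeat split; intros; try lia. apply H1; lia. apply H2; lia.
  - destruct IHsplit1 as [H1 [H2 [H3 [H4 [H5 H6]]]]].
    destruct IHsplit2 as [G1 [G2 [G3 [G4 [G5 G6]]]]].
    repeat split; intros; try lia. rewrite H1, G1; lia. rewrite H2, G2; lia.
  - destruct IHsplit1 as [H1 [H2 [H3 [H4 [H5 H6]]]]].
    destruct IHsplit2 as [G1 [G2 [G3 [G4 [G5 G6]]]]].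
    assert (E0 : pm 0 t' = pm 0 t) by (apply H1; lia). rewrite E0.
    set (m := Nat.max 1 (pm 0 t)).
    repeat split; intros.
    + rewrite H1, G1; lia.
    + rewrite H2, G2; lia.
    + rewrite <- G3, <- H3. ring.
    + lia.
    + lia.
    + lia.
Qed.

Definition dec t' t :=
  (Sz t' < Sz t /\ forall j, pm j t' <= pm j t) \/
  (Sz t' = Sz t /\ (forall j, pm j t' = pm j t) /\ Fm t' = Fm t /\ Nm t < Nm t').

Lemma mx : forall x, 1 <= x -> Nat.max 1 x = x.
Proof. intros; lia. Qed.

Lemma mono_m : forall a b x, a <= b -> Nat.max 1 a * x <= Nat.max 1 b * x.
Proof. intros. apply Nat.mul_le_mono_r; lia. Qed.

Lemma pos_pm : forall t k, 1 <= occ k t -> 1 <= pm k t.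
Proof. intros t k H. pose proof (occ_le_pm t k). lia. Qed.

Lemma jrule_dec : forall t t', jrule t t' -> dec t' t.
Proof.
  intros t t' H; destruct H as [t u H|t u H|t u t' H2 Hs H0 H1].
  - left. apply occ_pm0 in H. cbn [Sz pm]. rewrite Sz_lower, H. pose proof (Sz_pos u).
    split. lia. intros j. destruct j.
    + rewrite pm_lower_eq. rewrite H. lia.
    + rewrite pm_lower_gt by lia. lia.
  - left. assert (Hp : 1 <= pm 0 t) by (apply pos_pm; lia).
    cbn [Sz pm]. rewrite (mx _ Hp). pose proof (Sz_subst t 0 u). split.
    + pose proof (Sz_pos u). nia.
    + intros j. rewrite pm_subst_ge by lia. rewrite Nat.sub_0_r. lia.
  - right. destruct (split_props _ _ _ Hs) as [_ [K2 [K3 [K4 [K5 K6]]]]].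
    assert (P0 : 1 <= pm 0 t') by (apply pos_pm; lia).
    assert (P1 : 1 <= pm 1 t') by (apply pos_pm; lia).
    assert (Q : 1 <= pm 0 t) by lia.
    cbn [Sz pm Fm Nm]. rewrite pm_lift_eq, Sz_lift, Fm_lift, Nm_lift.
    rewrite Nat.mul_0_r, Nat.add_0_r. rewrite !mx by lia.
    repeat split.
    + rewrite <- K3. rewrite K4. ring.
    + intros j. rewrite pm_lift_ge by lia. rewrite K2 by lia. rewrite <- K3. ring.
    + rewrite <- K3. rewrite K5. ring.
    + lia.
Qed.

Lemma jstep_dec : forall t t', jstep t t' -> dec t' t.
Proof.
  unfold jstep. induction 1.
  - apply jrule_dec; auto.
  - destruct IHctx as [[A B]|[A [B [C D]]]]; [left|right]; cbn [Sz pm Fm Nm].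
    + split. lia. intros j. apply B.
    + repeat split; auto.
  - destruct IHctx as [[A B]|[A [B [C D]]]]; [left|right]; cbn [Sz pm Fm Nm].
    + split. lia. intros j. specialize (B j). lia.
    + repeat split; try lia. intros j. rewrite B. lia.
  - destruct IHctx as [[A B]|[A [B [C D]]]]; [left|right]; cbn [Sz pm Fm Nm].
    + split. lia. intros j. specialize (B j). lia.
    + repeat split; try lia. intros j. rewrite B. lia.
  - destruct IHctx as [[A B]|[A [B [C D]]]]; [left|right]; cbn [Sz pm Fm Nm].
    + pose proof (mono_m _ _ (Sz s) (B 0)). split. lia.
      intros j. pose proof (mono_m _ _ (pm j s) (B 0)). specialize (B (S j)). lia.
    + rewrite !B. repeat split; try lia. intros j. rewrite !B. lia.
  - destruct IHctx as [[A B]|[A [B [C D]]]]; [left|right]; cbn [Sz pm Fm Nm].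
    + assert (1 <= Nat.max 1 (pm 0 s)) by lia.
      split. nia. intros j. specialize (B j). nia.
    + rewrite A, C. repeat split; try lia. intros j. rewrite B. lia.
Qed.

Definition same a b := Sz a = Sz b /\ Fm a = Fm b /\ Nm a = Nm b /\ forall j, pm j a = pm j b.

Lemma ax_same : forall a b, obox_ax a b -> same a b.
Proof.
  intros a b H; destruct H; unfold same; cbn [Sz Fm Nm pm].
  -
    apply occ_pm0 in H.
    rewrite !Sz_swap, !Fm_swap, !Nm_swap, Sz_lift, Fm_lift, Nm_lift, Sz_lower, Fm_lower, Nm_lower.
    rewrite !pm_swap, pm_lift_eq, H. rewrite sw0, sw1. cbn [sw Nat.eqb].
    rewrite ?Nat.mul_0_r, ?Nat.add_0_r. repeat split; try ring.
    intros j. rewrite pm_lift_ge by lia. rewrite pm_swap.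
    replace (sw 0 (S (S j))) with (S (S j)) by reflexivity.
    destruct j.
    + rewrite pm_lower_eq, H. ring.
    + rewrite pm_lower_gt by lia. ring.
  -
    apply occ_pm0 in H.
    rewrite !Sz_swap, !Fm_swap, !Nm_swap, Sz_lower, Fm_lower, Nm_lower, !pm_swap, sw1.
    rewrite ?Nat.mul_0_r, ?Nat.add_0_r. repeat split; try ring.
    intros j. rewrite pm_swap. replace (sw 0 (S (S j))) with (S (S j)) by reflexivity.
    destruct j.
    + rewrite pm_lower_eq, H. ring.
    + rewrite pm_lower_gt by lia. ring.
  -
    rewrite Sz_lift, Fm_lift, Nm_lift, pm_lift_eq, Nat.add_0_r.
    rewrite ?Nat.mul_0_r, ?Nat.add_0_r. repeat split; try ring. intros j. rewrite pm_lift_ge by lia. ring.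
  -
    apply occ_pm0 in H. rewrite H, Sz_lower, Fm_lower, Nm_lower. cbn [Nat.add].
    rewrite ?Nat.mul_0_r, ?Nat.add_0_r. repeat split; try ring. intros j. destruct j.
    + rewrite pm_lower_eq, H. ring.
    + rewrite pm_lower_gt by lia. ring.
  -
    apply occ_pm0 in H. apply pos_pm in H0.
    rewrite H, Sz_lower, Fm_lower, Nm_lower, Nat.add_0_l.
    rewrite (pm_lower_lt t 1 0) by lia.
    assert (Hm : 1 <= Nat.max 1 (pm 0 t)) by lia.
    rewrite (mx (Nat.max 1 (pm 0 t) * pm 0 v)) by nia.
    rewrite (mx (pm 0 v)) by lia.
    rewrite ?Nat.mul_0_r, ?Nat.add_0_r. repeat split; try ring.
    intros j. destruct j.
    + rewrite pm_lower_eq, H. ring.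
    + rewrite pm_lower_gt by lia. ring.
Qed.

Lemma ctx_same : forall a b, ctx obox_ax a b -> same a b.
Proof.
  induction 1; [apply ax_same; auto| | | | |];
  destruct IHctx as [A [B [C D]]]; unfold same; cbn [Sz Fm Nm pm];
  rewrite ?A, ?B, ?C, ?D; repeat split; intros; rewrite ?D; reflexivity.
Qed.

Lemma eq_same : forall a b, obox_eq a b -> same a b.
Proof.
  unfold obox_eq. induction 1.
  - apply ctx_same; auto.
  - unfold same; repeat split; auto.
  - destruct IHclos_refl_sym_trans as [A [B [C D]]]; unfold same; repeat split; auto.
  - destruct IHclos_refl_sym_trans1 as [A [B [C D]]].
    destruct IHclos_refl_sym_trans2 as [A' [B' [C' D']]].
    unfold same; repeat split; try congruence.
Qed.

Lemma jmod_dec : forall t u, jmod t u ->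
  Sz u < Sz t \/ (Sz u = Sz t /\ Fm u - Nm u < Fm t - Nm t).
Proof.
  intros t u [t' [u' [E1 [St E2]]]].
  apply eq_same in E1. apply eq_same in E2. apply jstep_dec in St.
  destruct E1 as [A1 [B1 [C1 _]]]. destruct E2 as [A2 [B2 [C2 _]]].
  pose proof (Nm_le_Fm u).
  destruct St as [[A _]|[A [_ [C D]]]]; [left; lia|right; lia].
Qed.

Theorem corollary28 : well_founded (fun u t => jmod t u).
Proof.
  assert (H : forall a b t, Sz t = a -> Fm t - Nm t = b -> Acc (fun u t => jmod t u) t).
  { intros a. induction a as [a IHa] using lt_wf_ind.
    intros b. induction b as [b IHb] using lt_wf_ind.
    intros t Ha Hb. constructor. intros u Hu. apply jmod_dec in Hu.
    destruct Hu as [Hu|[Hu1 Hu2]].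
    - apply (IHa (Sz u)) with (b := Fm u - Nm u); auto; lia.
    - apply (IHb (Fm u - Nm u)); auto; lia. }
  intros t. apply (H _ _ t eq_refl eq_refl).
Qed.
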